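(* Let $p\ge 3$ be an integer, let $x$ be a right vertex of $T_H$, and let $f$ be any $2p$ distance coloring of $T_H$. Then there exists a vertex $u\in\mathcal{F}_{x,p+1}$ such that $f(u)\notin f(V(D_x^{2p}))$.
   Context: $T_H$ is the infinite hexagonal grid with vertex set $\mathbb{Z}^2$: $(i,j)$ is adjacent to $(i,j\pm1)$, and $(i,j)$ is adjacent to $(i+1,j)$ iff $i+j$ is even; no other edges. A vertex $(i,j)$ with $i+j$ even is called a right vertex. $d(u,v)$ is graph distance. For $l\in\mathbb{N}$, an $l$ distance coloring is a map $f:V(T_H)\to\{1,\dots,n\}$ with $f(u)\ne f(v)$ for all distinct $u,v$ with $d(u,v)\le l$. For a vertex $x$ and integer $k\ge0$, $\mathcal{F}_{x,k}=\{u\in V(T_H): d(x,u)=k\}$. $D_x^{2p}$ is the subgraph of $T_H$ induced by $\{w: d(w,x)\le p\}$. *)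

(* Defs.v *)
From Stdlib Require Import ZArith Lia.
Open Scope Z_scope.

Definition vertex := (Z * Z)%type.

Definition right_vertex (v : vertex) : Prop := Z.Even (fst v + snd v).

Definition adj (u v : vertex) : Prop :=
  (fst v = fst u /\ (snd v = snd u + 1 \/ snd v = snd u - 1))
  \/ (right_vertex u /\ fst v = fst u + 1 /\ snd v = snd u)
  \/ (right_vertex v /\ fst u = fst v + 1 /\ snd u = snd v).

Inductive walk : vertex -> vertex -> nat -> Prop :=
| walk0 : forall u, walk u u 0
| walkS : forall u v w n, adj u v -> walk v w n -> walk u w (S n).

Definition dist_le (u v : vertex) (k : nat) : Prop :=
  exists m, (m <= k)%nat /\ walk u v m.

Definition dist_eq (u v : vertex) (k : nat) : Prop :=
  walk u v k /\ forall m, (m < k)%nat -> ~ walk u v m.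

Definition distance_coloring (l n : nat) (f : vertex -> nat) : Prop :=
  (forall v, (1 <= f v <= n)%nat) /\
  (forall u v, u <> v -> dist_le u v l -> f u <> f v).

(* Main.v *)
Require Import Defs.
From Stdlib Require Import ZArith Lia List Classical IndefiniteDescription.
Open Scope Z_scope.


Definition g (a b : Z) : Z :=
  Z.max (Z.abs a + Z.abs b) (Z.max (2*a-1) (-2*a)) + (Z.max (Z.abs a + Z.abs b) (Z.max (2*a-1) (-2*a)) - a - b) mod 2.
Definition h (v w : vertex) : Z :=
  if Z.even (fst v + snd v) then g (fst w - fst v) (snd w - snd v)
  else g (fst v - fst w) (snd w - snd v).

Lemma RV v : right_vertex v <-> (fst v + snd v) mod 2 = 0.
Proof. unfold right_vertex. rewrite <- Z.even_spec, Zeven_mod. apply Z.eqb_eq. Qed.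

Ltac deven := repeat match goal with
  | |- context [Z.even ?e] => rewrite (Zeven_mod e); destruct (Z.eqb_spec (e mod 2) 0)
  end.
Ltac revprops := repeat match goal with H : ?T |- _ => match type of T with Prop => revert H end end.
Ltac modfacts := repeat match goal with |- context [?e mod 2] =>
   let H1 := fresh in let H2 := fresh in
   pose proof (Z.mod_pos_bound e 2 ltac:(lia)) as H1; pose proof (Z.div_mod e 2 ltac:(lia)) as H2;
   revert H1 H2; generalize (e mod 2); generalize (e / 2) end.
Ltac zsolve := revprops; modfacts; intros; lia.

Lemma h_adj v v' w : adj v v' -> h v w <= h v' w + 1.
Proof.
  destruct v as [v1 v2], v' as [u1 u2], w as [w1 w2].
  unfold adj, h, g; rewrite !RV; cbn [fst snd] in *. deven; zsolve.
Qed.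

Lemma h_self v : h v v = 0.
Proof. destruct v as [a b]; unfold h, g; cbn [fst snd]. deven; zsolve. Qed.

Lemma h_walk v w n : walk v w n -> h v w <= Z.of_nat n.
Proof.
  induction 1. - rewrite h_self; lia.
  - pose proof (h_adj u v w H). lia.
Qed.

Lemma h_nonneg v w : 0 <= h v w.
Proof. destruct v as [a b], w as [c d]; unfold h, g; cbn [fst snd]. deven; zsolve. Qed.

Lemma h_zero v w : h v w = 0 -> v = w.
Proof. destruct v as [a b], w as [c d]; unfold h, g; cbn [fst snd]. intro H.
  assert (a = c /\ b = d) as [-> ->] by (revert H; deven; zsolve). reflexivity. Qed.

Lemma h_step v w : 0 < h v w -> exists v', adj v v' /\ h v' w = h v w - 1.
Proof.
  destruct v as [a b], w as [c d]. intro H.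
  destruct (Z.eq_dec ((a+b) mod 2) 0) as [E|E].
  - destruct (Z_le_gt_dec 1 (c-a)).
    + exists (a+1,b); split. { unfold adj; rewrite !RV; cbn; lia. }
      revert H; unfold h, g; cbn [fst snd]; deven; zsolve.
    + destruct (Z_le_gt_dec 1 (d-b)).
      * exists (a,b+1); split. { unfold adj; cbn; lia. }
        revert H; unfold h, g; cbn [fst snd]; deven; zsolve.
      * exists (a,b-1); split. { unfold adj; cbn; lia. }
        revert H; unfold h, g; cbn [fst snd]; deven; zsolve.
  - destruct (Z_le_gt_dec (c-a) (-1)).
    + exists (a-1,b); split. { unfold adj; rewrite !RV; cbn. right; right. split; [|lia].
        revert E; zsolve. }
      revert H; unfold h, g; cbn [fst snd]; deven; zsolve.
    + destruct (Z_le_gt_dec 1 (d-b)).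
      * exists (a,b+1); split. { unfold adj; cbn; lia. }
        revert H; unfold h, g; cbn [fst snd]; deven; zsolve.
      * exists (a,b-1); split. { unfold adj; cbn; lia. }
        revert H; unfold h, g; cbn [fst snd]; deven; zsolve.
Qed.

Lemma adj_sym u v : adj u v -> adj v u.
Proof. unfold adj; intros [H|[H|H]]; [left; lia|right;right;exact H|right;left;exact H]. Qed.

Lemma walk_app u v w m n : walk u v m -> walk v w n -> walk u w (m + n).
Proof. induction 1; intros; simpl; auto. eapply walkS; eauto. Qed.

Lemma walk_snoc u v w n : walk u v n -> adj v w -> walk u w (S n).
Proof. intros. replace (S n) with (n + 1)%nat by lia. eapply walk_app; eauto.
  eapply walkS; eauto. constructor. Qed.

Lemma walk_rev u v n : walk u v n -> walk v u n.
Proof. induction 1. constructor. eapply walk_snoc; eauto. now apply adj_sym. Qed.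

Lemma walk_of_h n : forall v w, h v w = Z.of_nat n -> walk v w n.
Proof.
  induction n; intros v w H.
  - apply h_zero in H; subst; constructor.
  - destruct (h_step v w) as [v' [H1 H2]]; [lia|].
    econstructor; eauto. apply IHn; lia.
Qed.

Lemma h_sym u v : h u v = h v u.
Proof.
  assert (HH : forall u v, h u v <= h v u).
  { intros a b. pose proof (h_nonneg b a) as H0.
    assert (H1 : walk b a (Z.to_nat (h b a))) by (apply walk_of_h; lia).
    apply walk_rev, h_walk in H1. lia. }
  pose proof (HH u v); pose proof (HH v u); lia.
Qed.

Lemma h_tri u v w : h u w <= h u v + h v w.
Proof.
  pose proof (h_nonneg u v); pose proof (h_nonneg v w).
  assert (walk u v (Z.to_nat (h u v))) by (apply walk_of_h; lia).
  assert (walk v w (Z.to_nat (h v w))) by (apply walk_of_h; lia).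
  pose proof (h_walk _ _ _ (walk_app _ _ _ _ _ H1 H2)). lia.
Qed.

Lemma dist_le_iff u v k : dist_le u v k <-> h u v <= Z.of_nat k.
Proof.
  split.
  - intros [m [Hm Hw]]. apply h_walk in Hw. lia.
  - intro H. pose proof (h_nonneg u v). exists (Z.to_nat (h u v)). split; [lia|].
    apply walk_of_h; lia.
Qed.

Lemma dist_eq_of u v k : h u v = Z.of_nat k -> dist_eq u v k.
Proof.
  intro H; split. apply walk_of_h; auto.
  intros m Hm Hw. apply h_walk in Hw. lia.
Qed.


Definition F6 (a b L : Z) : Prop := L <= a+b \/ L <= a-b \/ L <= -a+b \/ L <= -a-b \/ L <= 2*a-1 \/ L <= -2*a.
Definition C6 (a b L : Z) : Prop := a+b <= L /\ a-b <= L /\ -a+b <= L /\ -a-b <= L /\ 2*a-1 <= L /\ -2*a <= L.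
Lemma g_gt_even a b K : (a+b) mod 2 = 0 -> K mod 2 = 0 -> K < g a b -> F6 a b (K+1).
Proof. unfold F6, g. zsolve. Qed.
Lemma g_gt_odd a b K : (a+b) mod 2 = 1 -> K < g a b -> F6 a b K.
Proof. unfold F6, g. zsolve. Qed.
Lemma g_le a b K : g a b <= K -> C6 a b K.
Proof. unfold C6, g. zsolve. Qed.
Lemma h_R a b w : (a+b) mod 2 = 0 -> h (a,b) w = g (fst w - a) (snd w - b).
Proof. intro H. unfold h. cbn [fst snd]. rewrite Zeven_mod, H. reflexivity. Qed.
Lemma h_L a b w : (a+b) mod 2 = 1 -> h (a,b) w = g (a - fst w) (snd w - b).
Proof. intro H. unfold h. cbn [fst snd]. rewrite Zeven_mod, H. reflexivity. Qed.

Lemma g_par a b : (g a b - a - b) mod 2 = 0.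
Proof. unfold g. zsolve. Qed.
Ltac psolve := repeat match goal with H : context [h _ _] |- _ => clear H | H : context [g _ _] |- _ => clear H
  | H : F6 _ _ _ |- _ => clear H | H : C6 _ _ _ |- _ => clear H | H : _ <> _ |- _ => clear H end; zsolve.
Ltac conv H := (rewrite h_R in H by psolve) || (rewrite h_L in H by psolve); cbn [fst snd] in H;
  first [ (eapply g_gt_even in H; [ | psolve | psolve ]) | (eapply g_gt_odd in H; [ | psolve ]) ].

Definition piece (m r : Z) (u : vertex) : Prop :=
  (exists i, 1 <= i <= m-1 /\ u = (m+r, -m+2*i)) \/
  (exists i, 1 <= i <= m+r-1 /\ u = (-m, -(m+r)+2*i)) \/
  (exists t, 1 <= t <= m+r-1 /\ u = (t, 2*m+r-t)) \/
  (exists t, 1 <= t <= m+r-1 /\ u = (t, -(2*m+r-t))) \/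
  (exists t, 1 <= t <= m-1 /\ u = (-t, 2*m+r-t)) \/
  (exists t, 1 <= t <= m-1 /\ u = (-t, -(2*m+r-t))).
Definition T1 (m r : Z) (u : vertex) : Prop :=
  u = (0, 2*m+r) \/ u = (m+r, -m) \/ u = (-m, -(m+r)).
Definition T2 (m r : Z) (u : vertex) : Prop :=
  u = (0, -(2*m+r)) \/ u = (m+r, m) \/ u = (-m, m+r).
Definition ext m r u := piece m r u \/ T1 m r u \/ T2 m r u.

Ltac dpiece H := unfold ext, piece, T1, T2 in H;
  repeat match type of H with
  | _ \/ _ => destruct H as [H|H]
  | exists _, _ => let i := fresh "i" in let Hi := fresh "Hi" in destruct H as [i [Hi H]]
  end; subst.

Lemma G2a m r u v w : 2 <= m -> (r = 0 \/ r = 1) -> piece m r u -> ext m r v -> u <> v ->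
  2*(2*m+r-1) < h u v -> 2*(2*m+r-1) < h u w -> 2*(2*m+r-1) < h v w ->
  g (fst w) (snd w) = 2*m+r-1 -> False.
Proof.
  intros Hm Hr Hu Hv Hne H1 H2 H3 H4. destruct w as [c d]; cbn [fst snd] in H4.
  pose proof (g_par c d) as Hw. rewrite H4 in Hw.
  assert (H5 : g c d <= 2*m+r-1) by lia. clear H4. apply g_le in H5; unfold C6 in H5. 
  destruct Hr; subst r; dpiece Hu; dpiece Hv; conv H1; conv H2; conv H3; unfold F6 in *;
  try (apply Hne; f_equal; lia);
  apply Z.mod_divide in Hw; try lia; destruct Hw as [s Hs]; lia.
Qed.

Lemma G2b m r u v w : 2 <= m -> (r = 0 \/ r = 1) -> T1 m r u -> T2 m r v ->
  2*(2*m+r-1) < h u v -> 2*(2*m+r-1) < h u w -> 2*(2*m+r-1) < h v w ->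
  g (fst w) (snd w) = 2*m+r-1 -> False.
Proof.
  intros Hm Hr Hu Hv H1 H2 H3 H4. destruct w as [c d]; cbn [fst snd] in H4.
  pose proof (g_par c d) as Hw. rewrite H4 in Hw.
  assert (H5 : g c d <= 2*m+r-1) by lia. clear H4. apply g_le in H5; unfold C6 in H5.
  destruct Hr; subst r; unfold T1, T2 in *;
  destruct Hu as [Hu|[Hu|Hu]]; destruct Hv as [Hv|[Hv|Hv]]; subst; conv H1; conv H2; conv H3; unfold F6 in *;
  apply Z.mod_divide in Hw; try lia; destruct Hw as [s Hs]; lia.
Qed.

Lemma G3a m r w : 2 <= m -> (r = 0 \/ r = 1) ->
  2*(2*m+r-1) < h (0, 2*m+r) w -> 2*(2*m+r-1) < h (m+r, -m) w -> 2*(2*m+r-1) < h (-m, -(m+r)) w ->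
  g (fst w) (snd w) = 2*m+r-1 -> False.
Proof.
  intros Hm Hr H1 H2 H3 H4. destruct w as [c d]; cbn [fst snd] in H4.
  pose proof (g_par c d) as Hw. rewrite H4 in Hw.
  assert (H5 : g c d <= 2*m+r-1) by lia. clear H4. apply g_le in H5; unfold C6 in H5.
  destruct Hr; subst r; conv H1; conv H2; conv H3; unfold F6 in *;
  apply Z.mod_divide in Hw; try lia; destruct Hw as [s Hs]; lia.
Qed.

Lemma G3b m r w : 2 <= m -> (r = 0 \/ r = 1) ->
  2*(2*m+r-1) < h (0, -(2*m+r)) w -> 2*(2*m+r-1) < h (m+r, m) w -> 2*(2*m+r-1) < h (-m, m+r) w ->
  g (fst w) (snd w) = 2*m+r-1 -> False.
Proof.
  intros Hm Hr H1 H2 H3 H4. destruct w as [c d]; cbn [fst snd] in H4.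
  pose proof (g_par c d) as Hw. rewrite H4 in Hw.
  assert (H5 : g c d <= 2*m+r-1) by lia. clear H4. apply g_le in H5; unfold C6 in H5.
  destruct Hr; subst r; conv H1; conv H2; conv H3; unfold F6 in *;
  apply Z.mod_divide in Hw; try lia; destruct Hw as [s Hs]; lia.
Qed.

Lemma ext_sphere m r u : 2 <= m -> (r = 0 \/ r = 1) -> ext m r u -> g (fst u) (snd u) = 2*m+r.
Proof.
  intros Hm Hr Hu. destruct Hr; subst r; dpiece Hu; cbn [fst snd]; unfold g; zsolve.
Qed.


Ltac divfacts := repeat match goal with |- context [?e / 2] =>
   let H1 := fresh in let H2 := fresh in
   pose proof (Z.mod_pos_bound e 2 ltac:(lia)) as H1; pose proof (Z.div_mod e 2 ltac:(lia)) as H2;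
   revert H1 H2; generalize (e mod 2); generalize (e / 2) end.
Ltac zsolve2 := revprops; divfacts; modfacts; intros; lia.

Definition idx (m r : Z) (w : vertex) : Z :=
  let a := fst w in let b := snd w in
  if andb (a <? 0) (a+b <=? 0) then (b-a)/2 + m - 1
  else if andb (0 <? a+b) (a <=? b) then 2*(m-1+r) + a + m - 1
  else 2*(m-1+r) + (2*m+r-1) + (a+b)/2 + m.

Lemma idx_range m r w : 2 <= m -> (r = 0 \/ r = 1) -> g (fst w) (snd w) = 2*m+r-1 ->
  0 <= idx m r w < 3*(2*m+r-1).
Proof.
  intros Hm Hr H. destruct w as [a b]. unfold idx; cbn [fst snd] in *.
  destruct (a <? 0) eqn:E1; destruct (a+b <=? 0) eqn:E2; destruct (0 <? a+b) eqn:E3;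
  destruct (a <=? b) eqn:E4; cbv beta iota delta [andb];
  rewrite ?Z.ltb_lt, ?Z.ltb_ge, ?Z.leb_le, ?Z.leb_gt in *;
  revert H; unfold g; destruct Hr; subst r; zsolve2.
Qed.

Lemma idx_inj m r w w' : 2 <= m -> (r = 0 \/ r = 1) -> g (fst w) (snd w) = 2*m+r-1 ->
  g (fst w') (snd w') = 2*m+r-1 -> idx m r w = idx m r w' -> w = w'.
Proof.
  intros Hm Hr H H'. destruct w as [a b], w' as [c d]. unfold idx; cbn [fst snd] in *.
  destruct (a <? 0) eqn:E1; destruct (a+b <=? 0) eqn:E2; destruct (0 <? a+b) eqn:E3;
  destruct (a <=? b) eqn:E4;
  destruct (c <? 0) eqn:F1; destruct (c+d <=? 0) eqn:F2; destruct (0 <? c+d) eqn:F3;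
  destruct (c <=? d) eqn:F4; cbv beta iota delta [andb];
  rewrite ?Z.ltb_lt, ?Z.ltb_ge, ?Z.leb_le, ?Z.leb_gt in *; intro He;
  assert (a = c /\ b = d) as [-> ->] by (revert H H' He; unfold g; destruct Hr; subst r; zsolve2); reflexivity.
Qed.


Definition E (m r k : Z) : vertex :=
  if k <? m-1 then (m+r, -m+2*(k+1))
  else if k <? 2*m+r-2 then (-m, -(m+r)+2*(k-(m-1)+1))
  else if k <? 3*m+2*r-3 then (k-(2*m+r-2)+1, 2*m+r-(k-(2*m+r-2)+1))
  else if k <? 4*m+3*r-4 then (k-(3*m+2*r-3)+1, -(2*m+r-(k-(3*m+2*r-3)+1)))
  else if k <? 5*m+3*r-5 then (-(k-(4*m+3*r-4)+1), 2*m+r-(k-(4*m+3*r-4)+1))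
  else (-(k-(5*m+3*r-5)+1), -(2*m+r-(k-(5*m+3*r-5)+1))).

Ltac dltb := repeat match goal with |- context [?a <? ?b] =>
  destruct (Z.ltb_spec a b) end.

Lemma E_piece m r k : 2 <= m -> (r = 0 \/ r = 1) -> 0 <= k < 6*m+3*r-6 -> piece m r (E m r k).
Proof.
  intros Hm Hr Hk. unfold E, piece. dltb.
  - left. exists (k+1). split; [lia|reflexivity].
  - right; left. eexists; split; [|reflexivity]; lia.
  - right; right; left. eexists; split; [|reflexivity]; lia.
  - right; right; right; left. eexists; split; [|reflexivity]; lia.
  - right; right; right; right; left. eexists; split; [|reflexivity]; lia.
  - right; right; right; right; right. eexists; split; [|reflexivity]; lia.
Qed.

Lemma E_inj m r k k' : 2 <= m -> (r = 0 \/ r = 1) -> 0 <= k < 6*m+3*r-6 -> 0 <= k' < 6*m+3*r-6 ->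
  E m r k = E m r k' -> k = k'.
Proof.
  intros Hm Hr Hk Hk'. unfold E. dltb; intro He; apply pair_equal_spec in He; destruct He; lia.
Qed.

Lemma piece_not_T1 m r u : 2 <= m -> (r = 0 \/ r = 1) -> piece m r u -> T1 m r u -> False.
Proof. intros Hm Hr Hu Ht. unfold piece, T1 in *.
  destruct Ht as [Ht|[Ht|Ht]]; subst u;
  destruct Hu as [[i [Hi Hu]]|[[i [Hi Hu]]|[[i [Hi Hu]]|[[i [Hi Hu]]|[[i [Hi Hu]]|[i [Hi Hu]]]]]]];
  apply pair_equal_spec in Hu; lia. Qed.
Lemma piece_not_T2 m r u : 2 <= m -> (r = 0 \/ r = 1) -> piece m r u -> T2 m r u -> False.
Proof. intros Hm Hr Hu Ht. unfold piece, T2 in *.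
  destruct Ht as [Ht|[Ht|Ht]]; subst u;
  destruct Hu as [[i [Hi Hu]]|[[i [Hi Hu]]|[[i [Hi Hu]]|[[i [Hi Hu]]|[[i [Hi Hu]]|[i [Hi Hu]]]]]]];
  apply pair_equal_spec in Hu; lia. Qed.
Lemma T1_not_T2 m r u : 2 <= m -> (r = 0 \/ r = 1) -> T1 m r u -> T2 m r u -> False.
Proof. intros Hm Hr Hu Ht. unfold T1, T2 in *.
  destruct Ht as [Ht|[Ht|Ht]]; subst u; destruct Hu as [H|[H|H]]; apply pair_equal_spec in H; lia. Qed.


Lemma pig (n M : nat) (F : nat -> nat) : (forall k, (k < n)%nat -> (F k < M)%nat) ->
  (forall k k', (k < n)%nat -> (k' < n)%nat -> F k = F k' -> k = k') -> (n <= M)%nat.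
Proof.
  intros H1 H2.
  assert (HN : NoDup (map F (seq 0 n))).
  { apply NoDup_map_NoDup_ForallPairs; [|apply seq_NoDup].
    intros a b Ha Hb. apply in_seq in Ha; apply in_seq in Hb. apply H2; lia. }
  assert (HI : incl (map F (seq 0 n)) (seq 0 M)).
  { intros y Hy. apply in_map_iff in Hy. destruct Hy as [k [<- Hk]]. apply in_seq in Hk.
    apply in_seq. specialize (H1 k). lia. }
  pose proof (NoDup_incl_length HN HI). rewrite length_map, !length_seq in H. exact H.
Qed.

Definition tr (x u : vertex) : vertex := (fst x + fst u, snd x + snd u).
Definition sub (x w : vertex) : vertex := (fst w - fst x, snd w - snd x).

Lemma tr_sub x w : tr x (sub x w) = w.
Proof. destruct x, w; unfold tr, sub; cbn; f_equal; lia. Qed.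
Lemma tr_inj x u v : tr x u = tr x v -> u = v.
Proof. destruct x, u, v; unfold tr; cbn. intro H. apply pair_equal_spec in H. f_equal; lia. Qed.
Lemma sub_tr x u : sub x (tr x u) = u.
Proof. destruct x, u; unfold tr, sub; cbn; f_equal; lia. Qed.
Lemma tr0 x : tr x (0,0) = x.
Proof. destruct x; unfold tr; cbn; f_equal; lia. Qed.

Lemma h_tr x u v : (fst x + snd x) mod 2 = 0 -> h (tr x u) (tr x v) = h u v.
Proof.
  destruct x as [x1 x2], u as [u1 u2], v as [v1 v2]; unfold h, tr; cbn [fst snd]; intro Hx.
  assert (E0 : Z.even (x1 + u1 + (x2 + u2)) = Z.even (u1 + u2)).
  { rewrite !Zeven_mod. f_equal. revert Hx. zsolve. }
  rewrite E0. destruct (Z.even (u1+u2)); f_equal; lia.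
Qed.

Lemma h_x x w : (fst x + snd x) mod 2 = 0 -> h x w = g (fst (sub x w)) (snd (sub x w)).
Proof.
  intro Hx. rewrite <- (tr0 x) at 1. rewrite <- (tr_sub x w) at 1. rewrite h_tr by exact Hx.
  rewrite h_R by reflexivity. cbn [fst snd]. f_equal; lia.
Qed.

Theorem main (p : nat) (x : vertex) (n : nat) (f : vertex -> nat) :
  (3 <= p)%nat ->
  right_vertex x ->
  distance_coloring (2 * p) n f ->
  exists u : vertex,
    dist_eq x u (p + 1) /\
    (forall w : vertex, dist_le w x p -> f u <> f w).
Proof.
  intros Hp Hx [_ Hcol]. apply RV in Hx.
  apply NNPP; intro Hno.
  set (pz := Z.of_nat p).
  assert (Hbad : forall u, h x u = pz + 1 -> exists w, h x w = pz /\ f u = f w /\ 2*pz < h u w).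
  { intros u Hu. apply NNPP; intro Hn. apply Hno. exists u. split.
    - apply dist_eq_of. rewrite Nat2Z.inj_add. exact Hu.
    - intros w Hw Heq. apply Hn. exists w.
      apply dist_le_iff in Hw. rewrite h_sym in Hw.
      assert (Hne : u <> w) by (intro; subst; lia).
      assert (Hgt : 2*pz < h u w).
      { destruct (Z_lt_le_dec (2*pz) (h u w)) as [H|H]; auto.
        exfalso. apply (Hcol u w Hne); auto. apply dist_le_iff. rewrite Nat2Z.inj_mul. exact H. }
      pose proof (h_tri u x w). rewrite (h_sym u x) in H. lia. }
  assert (Hex : forall u, exists w, h x u = pz + 1 -> h x w = pz /\ f u = f w /\ 2*pz < h u w).
  { intro u. destruct (Z.eq_dec (h x u) (pz+1)) as [H|H].
    - destruct (Hbad u H) as [w Hw]. exists w; auto.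
    - exists u; intro; contradiction. }
  set (Wf := fun u => proj1_sig (constructive_indefinite_description _ (Hex u))).
  assert (HW : forall u, h x u = pz + 1 -> h x (Wf u) = pz /\ f u = f (Wf u) /\ 2*pz < h u (Wf u)).
  { intro u. exact (proj2_sig (constructive_indefinite_description _ (Hex u))). }
  clearbody Wf. clear Hex Hbad.
  assert (Hcoll : forall u v, h x u = pz + 1 -> h x v = pz + 1 -> u <> v -> Wf u = Wf v ->
     2*pz < h u v /\ 2*pz < h u (Wf u) /\ 2*pz < h v (Wf u) /\ h x (Wf u) = pz).
  { intros u v Hu Hv Hne HE. destruct (HW u Hu) as [A1 [A2 A3]]. destruct (HW v Hv) as [B1 [B2 B3]].
    rewrite <- HE in B2, B3. repeat split; auto.
    destruct (Z_lt_le_dec (2*pz) (h u v)) as [H|H]; auto.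
    exfalso. apply (Hcol u v Hne). apply dist_le_iff. rewrite Nat2Z.inj_mul. exact H. congruence. }
  set (m := (pz + 1) / 2). set (r := (pz + 1) mod 2).
  assert (Hmr : pz + 1 = 2*m + r /\ (r = 0 \/ r = 1) /\ 2 <= m).
  { unfold m, r. assert (3 <= pz) by lia. clear -H. zsolve. }
  destruct Hmr as [Hmr [Hr Hm]]. clearbody m r.
  assert (Hsph : forall u, ext m r u -> h x (tr x u) = pz + 1).
  { intros u Hu. rewrite h_x by exact Hx. rewrite sub_tr.
    apply (ext_sphere m r u Hm Hr) in Hu. lia. }
  assert (GC : forall u v, ((piece m r u /\ ext m r v) \/ (T1 m r u /\ T2 m r v)) -> u <> v ->
      Wf (tr x u) = Wf (tr x v) -> False).
  { intros u v Huv Hne HE.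
    assert (Hu : ext m r u) by (unfold ext; tauto).
    assert (Hv : ext m r v) by (unfold ext; tauto).
    assert (Hne' : tr x u <> tr x v) by (intro H; apply Hne; eapply tr_inj; eauto).
    destruct (Hcoll (tr x u) (tr x v) (Hsph u Hu) (Hsph v Hv) Hne' HE) as [C1 [C2 [C3 C4]]].
    rewrite <- (tr_sub x (Wf (tr x u))) in C2, C3.
    rewrite h_tr in C1, C2, C3 by exact Hx. rewrite h_x in C4 by exact Hx.
    replace pz with (2*m+r-1) in * by lia.
    destruct Huv as [[H1 H2]|[H1 H2]].
    - exact (G2a m r u v _ Hm Hr H1 H2 Hne C1 C2 C3 C4).
    - exact (G2b m r u v _ Hm Hr H1 H2 C1 C2 C3 C4). }
  assert (Hch1 : exists c c', T1 m r c /\ T1 m r c' /\ Wf (tr x c) <> Wf (tr x c')).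
  { set (A := (0, 2*m+r)). set (B := (m+r, -m)). set (C := (-m, -(m+r))).
    assert (TA : T1 m r A) by (unfold T1; auto).
    assert (TB : T1 m r B) by (unfold T1; auto).
    assert (TC : T1 m r C) by (unfold T1; auto).
    destruct (classic (Wf (tr x A) = Wf (tr x B))) as [EAB|EAB]; [|exists A, B; auto].
    destruct (classic (Wf (tr x A) = Wf (tr x C))) as [EAC|EAC]; [|exists A, C; auto].
    exfalso.
    assert (HA := HW _ (Hsph A (or_intror (or_introl TA)))).
    assert (HB := HW _ (Hsph B (or_intror (or_introl TB)))).
    assert (HC := HW _ (Hsph C (or_intror (or_introl TC)))).
    rewrite <- EAB in HB. rewrite <- EAC in HC.
    destruct HA as [A1 [_ A3]], HB as [_ [_ B3]], HC as [_ [_ C3]].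
    rewrite <- (tr_sub x (Wf (tr x A))) in A3, B3, C3.
    rewrite h_tr in A3, B3, C3 by exact Hx. rewrite h_x in A1 by exact Hx.
    replace pz with (2*m+r-1) in * by lia.
    exact (G3a m r _ Hm Hr A3 B3 C3 A1). }
  assert (Hch2 : exists c c', T2 m r c /\ T2 m r c' /\ Wf (tr x c) <> Wf (tr x c')).
  { set (A := (0, -(2*m+r))). set (B := (m+r, m)). set (C := (-m, m+r)).
    assert (TA : T2 m r A) by (unfold T2; auto).
    assert (TB : T2 m r B) by (unfold T2; auto).
    assert (TC : T2 m r C) by (unfold T2; auto).
    destruct (classic (Wf (tr x A) = Wf (tr x B))) as [EAB|EAB]; [|exists A, B; auto].
    destruct (classic (Wf (tr x A) = Wf (tr x C))) as [EAC|EAC]; [|exists A, C; auto].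
    exfalso.
    assert (HA := HW _ (Hsph A (or_intror (or_intror TA)))).
    assert (HB := HW _ (Hsph B (or_intror (or_intror TB)))).
    assert (HC := HW _ (Hsph C (or_intror (or_intror TC)))).
    rewrite <- EAB in HB. rewrite <- EAC in HC.
    destruct HA as [A1 [_ A3]], HB as [_ [_ B3]], HC as [_ [_ C3]].
    rewrite <- (tr_sub x (Wf (tr x A))) in A3, B3, C3.
    rewrite h_tr in A3, B3, C3 by exact Hx. rewrite h_x in A1 by exact Hx.
    replace pz with (2*m+r-1) in * by lia.
    exact (G3b m r _ Hm Hr A3 B3 C3 A1). }
  destruct Hch1 as [c1 [c1' [Tc1 [Tc1' Hc1]]]].
  destruct Hch2 as [c2 [c2' [Tc2 [Tc2' Hc2]]]].
  set (N := 6*m+3*r-6).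
  set (S := fun k => if k <? N then E m r k else if k =? N then c1 else if k =? N+1 then c1'
                     else if k =? N+2 then c2 else c2').
  assert (HSext : forall k, 0 <= k < N+4 ->
     (k < N /\ piece m r (S k)) \/ (N <= k < N+2 /\ T1 m r (S k)) \/ (N+2 <= k /\ T2 m r (S k))).
  { intros k Hk. unfold S.
    destruct (Z.ltb_spec k N). { left; split; auto. apply E_piece; auto. unfold N in *; lia. }
    destruct (Z.eqb_spec k N). { right; left; split; auto; lia. }
    destruct (Z.eqb_spec k (N+1)). { right; left; split; auto; lia. }
    destruct (Z.eqb_spec k (N+2)). { right; right; split; auto; lia. }
    right; right; split; auto; lia. }
  assert (HSinj : forall k k', 0 <= k < N+4 -> 0 <= k' < N+4 -> Wf (tr x (S k)) = Wf (tr x (S k')) -> k = k').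
  { intros k k' Hk Hk' HE.
    destruct (Z.eq_dec k k') as [|Hkk]; auto. exfalso.
    assert (Hd : S k <> S k' \/ S k = S k') by tauto.
    destruct Hd as [Hd|Hd].
    - destruct (HSext k Hk) as [[K1 K2]|[[K1 K2]|[K1 K2]]];
      destruct (HSext k' Hk') as [[K1' K2']|[[K1' K2']|[K1' K2']]].
      + apply (GC (S k) (S k')); auto. left; split; auto; left; auto.
      + apply (GC (S k) (S k')); auto. left; split; auto; right; left; auto.
      + apply (GC (S k) (S k')); auto. left; split; auto; right; right; auto.
      + apply (GC (S k') (S k)); auto. left; split; auto; right; left; auto.
      +
        unfold S in HE. destruct (Z.ltb_spec k N); [lia|]. destruct (Z.ltb_spec k' N); [lia|].
        destruct (Z.eqb_spec k N); destruct (Z.eqb_spec k' N); destruct (Z.eqb_spec k (N+1));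
        destruct (Z.eqb_spec k' (N+1)); try lia; subst; auto.
      + apply (GC (S k) (S k')); auto.
      + apply (GC (S k') (S k)); auto. left; split; auto; right; right; auto.
      + apply (GC (S k') (S k)); auto.
      + unfold S in HE. destruct (Z.ltb_spec k N); [lia|]. destruct (Z.ltb_spec k' N); [lia|].
        destruct (Z.eqb_spec k N); [lia|]. destruct (Z.eqb_spec k' N); [lia|].
        destruct (Z.eqb_spec k (N+1)); [lia|]. destruct (Z.eqb_spec k' (N+1)); [lia|].
        destruct (Z.eqb_spec k (N+2)); destruct (Z.eqb_spec k' (N+2)); try lia; auto.
    - destruct (HSext k Hk) as [[K1 K2]|[[K1 K2]|[K1 K2]]];
      destruct (HSext k' Hk') as [[K1' K2']|[[K1' K2']|[K1' K2']]];
      try (rewrite Hd in *; first [ exact (piece_not_T1 m r _ Hm Hr K2' K2)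
          | exact (piece_not_T1 m r _ Hm Hr K2 K2') | exact (piece_not_T2 m r _ Hm Hr K2' K2)
          | exact (piece_not_T2 m r _ Hm Hr K2 K2') | exact (T1_not_T2 m r _ Hm Hr K2' K2)
          | exact (T1_not_T2 m r _ Hm Hr K2 K2') ]).
      + unfold S in Hd. destruct (Z.ltb_spec k N); [|lia]. destruct (Z.ltb_spec k' N); [|lia].
        apply Hkk. apply (E_inj m r); auto; unfold N in *; lia.
      + unfold S in Hd. destruct (Z.ltb_spec k N); [lia|]. destruct (Z.ltb_spec k' N); [lia|].
        destruct (Z.eqb_spec k N); destruct (Z.eqb_spec k' N); destruct (Z.eqb_spec k (N+1));
        destruct (Z.eqb_spec k' (N+1)); try lia; subst; apply Hc1; congruence.
      + unfold S in Hd. destruct (Z.ltb_spec k N); [lia|]. destruct (Z.ltb_spec k' N); [lia|].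
        destruct (Z.eqb_spec k N); [lia|]. destruct (Z.eqb_spec k' N); [lia|].
        destruct (Z.eqb_spec k (N+1)); [lia|]. destruct (Z.eqb_spec k' (N+1)); [lia|].
        destruct (Z.eqb_spec k (N+2)); destruct (Z.eqb_spec k' (N+2)); try lia; apply Hc2; congruence. }
  set (F := fun k : nat => Z.to_nat (idx m r (sub x (Wf (tr x (S (Z.of_nat k))))))).
  assert (Hwk : forall k, 0 <= k < N+4 -> g (fst (sub x (Wf (tr x (S k))))) (snd (sub x (Wf (tr x (S k))))) = 2*m+r-1).
  { intros k Hk. assert (He : ext m r (S k)).
    { destruct (HSext k Hk) as [[_ H]|[[_ H]|[_ H]]]; unfold ext; auto. }
    destruct (HW _ (Hsph _ He)) as [H1 _]. rewrite h_x in H1 by exact Hx. lia. }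
  assert (Hle := pig (Z.to_nat (N+4)) (Z.to_nat (3*pz)) F).
  assert ((Z.to_nat (N+4) <= Z.to_nat (3*pz))%nat).
  { apply Hle.
    - intros k Hk. unfold F. assert (Hk' : 0 <= Z.of_nat k < N+4) by lia.
      pose proof (idx_range m r _ Hm Hr (Hwk _ Hk')). lia.
    - intros k k' Hk Hk' HF. unfold F in HF.
      assert (Hk1 : 0 <= Z.of_nat k < N+4) by lia. assert (Hk2 : 0 <= Z.of_nat k' < N+4) by lia.
      pose proof (idx_range m r _ Hm Hr (Hwk _ Hk1)). pose proof (idx_range m r _ Hm Hr (Hwk _ Hk2)).
      assert (HI : idx m r (sub x (Wf (tr x (S (Z.of_nat k))))) = idx m r (sub x (Wf (tr x (S (Z.of_nat k')))))) by lia.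
      apply idx_inj in HI; auto.
      assert (HW2 : Wf (tr x (S (Z.of_nat k))) = Wf (tr x (S (Z.of_nat k')))).
      { rewrite <- (tr_sub x (Wf (tr x (S (Z.of_nat k))))), HI, tr_sub. reflexivity. }
      apply HSinj in HW2; auto. lia. }
  unfold N in H. lia.
Qed.


Theorem theorem1 (p : nat) (x : vertex) (n : nat) (f : vertex -> nat) :
  (3 <= p)%nat ->
  right_vertex x ->
  distance_coloring (2 * p) n f ->
  exists u : vertex,
    dist_eq x u (p + 1) /\
    (forall w : vertex, dist_le w x p -> f u <> f w).
Proof. exact (main p x n f). Qed.
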